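(* Consider an instance of \textbf{LTSP} in which there is $k\in\mathbb N$ such that $s(f)=k$ and $n(f)=1$ for every file $f\in\mathcal F$. Then $\mathcal B_1=\emptyset$ is optimal, i.e., $v(\emptyset)\le v(\mathcal B_1)$ for every set $\mathcal B_1$ of mini-batches.
   Context: A single-track tape stores a sequence of files $\mathcal F=(f_1,\dots,f_n)$ laid out contiguously from left to right: file $f$ occupies blocks $l(f),\dots,r(f)$, has size $s(f)=r(f)-l(f)+1$, $l(f_1)=1$, $l(f_{i+1})=r(f_i)+1$, and $m=\sum_f s(f)$. The tape moves one block per time step; at time $0$ the head is at position $m$. A file is read when the head traverses it rightwards from $l(f)$ to $r(f)$. $\mathcal R$ is a finite set of requests, all released at time $0$, each associated with a file $f(r)$; $\mathcal R(f)$ is the set of requests for $f$ and $n(f)=|\mathcal R(f)|$. A request's response time is the time at which the head starts a rightward reading traversal of its file (all pending requests of a file are serviced simultaneously). \textbf{LTSP} asks to minimize the sum of response times. A mini-batch is a pair $b=(f,f')$ of files with $l(f)\le l(f')$; $l(b)=l(f)$, $r(b)=r(f')$, $s(b)=r(b)-l(b)+1$, and $\mathcal F(b)$ is the set of files $g$ with $l(b)\le l(g)$ and $r(g)\le r(b)$; it is atomic if $|\mathcal F(b)|=1$. Given a set $\mathcal B_1$ of mini-batches, the associated schedule is: Phase 1, the head moves leftwards from $m$ to position $1$, and whenever it reaches $l(b)$ for some $b\in\mathcal B_1$ it executes $b$ (moves rightwards from $l(b)$ to $r(b)$, reading every file of $\mathcal F(b)$, then returns to $l(b)$) before continuing leftwards,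 mini-batches thus being executed in decreasing order of their left endpoints; Phase 2, the head moves rightwards from position $1$ to $m$, reading every file. $v(\mathcal B_1)$ denotes the total response time of this schedule. *)

(* Defs.v *)
From mathcomp Require Import all_boot.
Set Implicit Arguments. Unset Strict Implicit. Unset Printing Implicit Defensive.

(* An LTSP instance: files f_0 .. f_{n-1} (0-indexed), sizes s : nat -> nat,
   request counts nr : nat -> nat (nr i = n(f_i)). *)

Definition lpos (s : nat -> nat) (i : nat) : nat := 1 + \sum_(j < i) s j.
Definition rpos (s : nat -> nat) (i : nat) : nat := lpos s i + s i - 1.
(* m = total number of blocks *)
Definition tape_len (n : nat) (s : nat -> nat) : nat := \sum_(j < n) s j.

(* A mini-batch is a pair (i, j) of file indices with l(f_i) <= l(f_j). *)
Definition minibatch := (nat * nat)%type.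
Definition lb (s : nat -> nat) (b : minibatch) : nat := lpos s b.1.
Definition rb (s : nat -> nat) (b : minibatch) : nat := rpos s b.2.
Definition sb (s : nat -> nat) (b : minibatch) : nat := rb s b - lb s b + 1.
Definition in_batch (s : nat -> nat) (b : minibatch) (g : nat) : bool :=
  (lb s b <= lpos s g) && (rpos s g <= rb s b).

(* A set B1 of mini-batches, listed in an execution order of the schedule:
   duplicate-free, every pair is a mini-batch of the instance, and executed in
   non-increasing order of left endpoints (ties in any order). *)
Definition valid_batches (n : nat) (s : nat -> nat) (bs : seq minibatch) : bool :=
  [&& uniq bs,
      all (fun b : minibatch => [&& b.1 < n, b.2 < n & lpos s b.1 <= lpos s b.2]) bs
    & sorted (fun b c : minibatch => lb s c <= lb s b) bs].

(* Time at which execution of the t-th batch of bs starts: the head travels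
   leftwards from m to l(b_t) (m - l(b_t) steps) plus the duration of all
   previously executed batches; executing b (traversing its s(b) blocks
   rightwards and coming back) takes 2 s(b) steps. *)
Definition batch_start (n : nat) (s : nat -> nat) (bs : seq minibatch) (t : nat) : nat :=
  (tape_len n s - lb s (nth (0, 0) bs t))
  + \sum_(u < t) 2 * sb s (nth (0, 0) bs u).

(* Time at which Phase 2 starts (head at position 1). *)
Definition phase2_start (n : nat) (s : nat -> nat) (bs : seq minibatch) : nat :=
  (tape_len n s - 1) + \sum_(b <- bs) 2 * sb s b.

(* Response time of (the requests of) file g: first rightward reading traversal. *)
Definition response (n : nat) (s : nat -> nat) (bs : seq minibatch) (g : nat) : nat :=
  let t := find (fun b => in_batch s b g) bs in
  if t < size bs then batch_start n s bs t + (lpos s g - lb s (nth (0, 0) bs t))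
  else phase2_start n s bs + (lpos s g - 1).

Definition v (n : nat) (s nr : nat -> nat) (bs : seq minibatch) : nat :=
  \sum_(g < n) nr g * response n s bs g.

(* Main.v *)
Require Import Defs.
From mathcomp Require Import all_boot.
From mathcomp Require Import zify.
Set Implicit Arguments.

Section Aux.
Variables (n k : nat) (s : nat -> nat).
Hypothesis kpos : 0 < k.
Hypothesis Hs : forall i, i < n -> s i = k.

Lemma sum_k i : i <= n -> \sum_(j < i) s j = i * k.
Proof.
move=> hi; rewrite (eq_bigr (fun _ => k)); last by move=> j _; apply: Hs; have := ltn_ord j; lia.
by rewrite sum_nat_const card_ord.
Qed.

Lemma lposE i : i <= n -> lpos s i = 1 + i * k.
Proof. by move=> hi; rewrite /lpos sum_k. Qed.

Lemma tapeE : tape_len n s = n * k.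
Proof. exact: sum_k. Qed.

Lemma rposE i : i < n -> rpos s i = i * k + k.
Proof. move=> hi; rewrite /rpos lposE ?Hs //; lia. Qed.

Lemma sum_lt x : x <= n -> \sum_(g < n) (g < x) = x.
Proof.
move=> hx.
transitivity (\sum_(g < x) 1); last by rewrite sum_nat_const card_ord muln1.
rewrite (big_ord_widen _ (fun _ => 1) hx) [RHS]big_mkcond /=.
by apply: eq_bigr => i _; case: (i < x).
Qed.

Lemma in_batchE (b : minibatch) g : b.1 < n -> b.2 < n -> g < n ->
  in_batch s b g = (b.1 <= g) && (g <= b.2).
Proof.
move=> h1 h2 hg; rewrite /in_batch /lb /rb !lposE ?rposE; try lia.
case: (leqP b.1 g) => h3; case: (leqP g b.2) => h4 /=.
- apply/idP; nia.
- apply/negbTE/negP => /andP [_ H]; nia.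
- apply/negbTE/negP => /andP [H _]; nia.
- apply/negbTE/negP => /andP [H _]; nia.
Qed.

End Aux.

Theorem theorem1 (n k : nat) (s nr : nat -> nat) :
  0 < k ->
  (forall i, i < n -> s i = k) ->
  (forall i, i < n -> nr i = 1) ->
  forall bs : seq minibatch, valid_batches n s bs ->
  v n s nr [::] <= v n s nr bs.
Proof.
move=> kpos Hs Hnr bs /and3P [_ Hall Hsort].
set N := size bs.
set B := fun u => nth (0, 0) bs u.
set T := fun g => find (fun b => in_batch s b g) bs.
have HB u : u < N -> [/\ (B u).1 < n, (B u).2 < n & (B u).1 <= (B u).2].
  move=> hu; move/(all_nthP (0,0))/(_ u hu): Hall => /and3P [h1 h2 h3].
  split => //; move: h3; rewrite !(lposE _ _ kpos Hs); try lia.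
  by rewrite leq_add2l leq_pmul2r.
have Hsb u : u < N -> sb s (B u) = ((B u).2 - (B u).1 + 1) * k.
  move=> /HB [h1 h2 h3]; rewrite /sb /rb /lb (rposE _ _ kpos Hs) // (lposE _ _ kpos Hs); last lia.
  nia.
set a := fun g => (T g < N) * ((B (T g)).1 * k).
set C := fun g => \sum_(u < N) (u < T g) * (2 * sb s (B u)).
have Hkey g : g < n -> response n s bs g + 2 * a g = response n s [::] g + C g.
  move=> hg.
  have -> : response n s [::] g = tape_len n s - 1 + (lpos s g - 1).
    by rewrite /response /= /phase2_start big_nil addn0.
  rewrite /response -/(T g) -/N /a /C.
  have [hT|hT] := ltnP (T g) N.
    rewrite mul1n.
    have hin : in_batch s (B (T g)) g.
      by have := nth_find (0,0) (a:=fun b => in_batch s b g) (s:=bs); rewrite has_find => /(_ hT).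
    have [h1 h2 h3] := HB _ hT.
    move: hin; rewrite (in_batchE _ _ kpos Hs) // => /andP [h4 h5].
    rewrite /batch_start (big_ord_widen _ (fun u => 2 * sb s (B u)) (ltnW hT)) big_mkcond /=.
    have -> : \sum_(i < N) (if i < T g then 2 * sb s (B i) else 0) =
              \sum_(u < N) (u < T g) * (2 * sb s (B u)).
      by apply: eq_bigr => i _; case: (i < T g); rewrite ?mul1n ?mul0n.
    rewrite /lb (tapeE _ _ kpos Hs) !(lposE _ _ kpos Hs); try lia.
    have : (B (T g)).1 * k <= g * k by rewrite leq_pmul2r.
    have : (B (T g)).1 * k < n * k by rewrite ltn_pmul2r.
    change (nth (0,0) bs (T g)) with (B (T g)).
    move: (\sum_(u < N) _) ((B (T g)).1 * k) (n * k) (g * k) => S X Y Z; lia.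
    exact: ltnW h1.
  - have hTN : T g = N by apply/eqP; rewrite eqn_leq hT andbT; exact: find_size.
    rewrite hTN mul0n muln0 addn0 /phase2_start.
    have -> : \sum_(u < N) (u < N) * (2 * sb s (B u)) = \sum_(b <- bs) 2 * sb s b.
      rewrite (big_nth (0,0)) big_mkord; apply: eq_bigr => i _.
      by rewrite ltn_ord mul1n.
    lia.
have Hfind g : g < n -> T g < N -> in_batch s (B (T g)) g.
  move=> hg hT.
  by have := nth_find (0,0) (a:=fun b => in_batch s b g) (s:=bs); rewrite has_find => /(_ hT).
have Hcnt u : u < N -> \sum_(g < n) (T g == u) <= (B u).2 - (B u).1 + 1.
  move=> hu; have [h1 h2 h3] := HB _ hu.
  apply: (@leq_trans (\sum_(g < n) ((B u).1 <= g) && (g <= (B u).2))).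
    apply: leq_sum => g _; case: eqP => //= hTg.
    have hT : T g < N by rewrite hTg.
    have := Hfind g (ltn_ord g) hT; rewrite hTg (in_batchE _ _ kpos Hs) //.
    by move=> ->.
  have E : \sum_(g < n) (g < ((B u).2).+1) =
           \sum_(g < n) ((B u).1 <= g) && (g <= (B u).2) + \sum_(g < n) (g < (B u).1).
    rewrite -big_split /=; apply: eq_bigr => g _.
    case: (leqP (B u).1 g) => ha; case: (leqP g (B u).2) => hb /=; lia.
  move: E; rewrite !sum_lt; lia.
have Hlow u : u < N -> (B u).1 <= \sum_(g < n) (u < T g).
  move=> hu; have [h1 h2 h3] := HB _ hu.
  rewrite -{1}(@sum_lt n (B u).1); last lia.
  apply: leq_sum => g _; case: (ltnP g (B u).1) => //= hgu.
  case: (ltnP u (T g)) => // hTu.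
  have hT : T g < N by apply: leq_ltn_trans hu.
  have := Hfind g (ltn_ord g) hT.
  have [h1' h2' h3'] := HB _ hT.
  rewrite (in_batchE _ _ kpos Hs) // => /andP [h4 _].
  have Htr : transitive (fun b c : minibatch => lb s c <= lb s b).
    by move=> y x z hxy hyz; exact: leq_trans hyz hxy.
  have Hrf : reflexive (fun b c : minibatch => lb s c <= lb s b) by move=> x.
  have := @sorted_leq_nth _ (fun b c : minibatch => lb s c <= lb s b) Htr Hrf (0,0) bs Hsort (T g) u hT hu hTu.
  rewrite /lb !(lposE _ _ kpos Hs); try (by exact: ltnW h1); try (by exact: ltnW h1').
  rewrite leq_add2l leq_pmul2r // => H.
  have H' : (B u).1 <= (B (T g)).1 := H; lia.
have HC : \sum_(g < n) 2 * a g <= \sum_(g < n) C g.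
  apply: (@leq_trans (\sum_(g < n) \sum_(u < N) (T g == u) * (2 * ((B u).1 * k)))).
    apply: leq_sum => g _; rewrite /a.
    case: (ltnP (T g) N) => hT; last by rewrite mul0n muln0.
    rewrite (bigD1 (Ordinal hT)) //= eqxx mul1n; lia.
  rewrite exchange_big /=.
  apply: (@leq_trans (\sum_(u < N) (B u).1 * (2 * sb s (B u)))).
    apply: leq_sum => u _; rewrite -big_distrl /= Hsb //.
    have := Hcnt u (ltn_ord u).
    move: (\sum_(g < n) _) => c hc.
    have : c * (2 * ((B u).1 * k)) <= ((B u).2 - (B u).1 + 1) * (2 * ((B u).1 * k)).
      by rewrite leq_mul2r hc orbT.
    move: ((B u).2 - (B u).1 + 1) => d; lia.
  rewrite /C exchange_big /=; apply: leq_sum => u _.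
  rewrite -big_distrl /= leq_mul2r; apply/orP; right; exact: Hlow.
have E1 : v n s nr bs + \sum_(g < n) 2 * a g = v n s nr [::] + \sum_(g < n) C g.
  rewrite /v -!big_split /=; apply: eq_bigr => g _.
  by rewrite Hnr // !mul1n Hkey.
lia.
Qed.
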